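(* Let $U$ be a finite set of black vertices of $\frac1n\Lambda$, let $\bar U=U\cup\{u-\frac1ne_i+\frac1ne_j:u\in U,\ 1\le i,j\le D\}$ and $\partial U=\bar U\setminus U$. Let $q,q_+,q_-:\bar U\to(0,\infty)$ satisfy, for all $u\in U$, $\mathcal C_n(q)(u)=1$, $\mathcal C_n(q_+)(u)>1$ and $\mathcal C_n(q_-)(u)<1$, where $$\mathcal C_n(q)(u)=q(u)\sum_{i=1}^D\Big(\sum_{j=1}^Dq\big(u-\tfrac1ne_i+\tfrac1ne_j\big)\Big)^{-1}.$$ Then $\min_{\bar U}q/q_-=\min_{\partial U}q/q_-$ and $\max_{\bar U}q/q_+=\max_{\partial U}q/q_+$.
   Context: $\Lambda$ is a bipartite lattice in $\mathbb R^d$: vectors $e_1,\dots,e_D$ spanning $\mathbb R^d$ with $\sum e_i=0$ and $e_i\in v_0+\mathbb Z^d$; white vertices $\mathbb Z^d$, black vertices $\mathbb Z^d+v_0$, each white vertex $w$ joined to $w+e_1,\dots,w+e_D$ (so each black vertex $u$ is joined to $u-e_1,\dots,u-e_D$). *)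

(* Defs.v *)
From HB Require Import structures.
From mathcomp Require Import all_boot all_order all_algebra.
From mathcomp Require Import reals.
Set Implicit Arguments. Unset Strict Implicit. Unset Printing Implicit Defensive.
Import Order.TTheory GRing.Theory Num.Theory.
Local Open Scope ring_scope.

Definition is_int_vec (R : realType) (d : nat) (x : 'rV[R]_d) : Prop :=
  forall k : 'I_d, x ord0 k \is a Num.int.

Definition bipartite_lattice (R : realType) (d D : nat)
    (e : 'I_D -> 'rV[R]_d) (v0 : 'rV[R]_d) : Prop :=
  [/\ row_full (\matrix_(i < D) e i),
      \sum_(i < D) e i = 0
    & forall i, is_int_vec (e i - v0)].

(* u is a black vertex of (1/n) Lambda, i.e. u in (1/n)(Z^d + v0). *)
Definition black_vertex (R : realType) (d : nat) (v0 : 'rV[R]_d) (n : nat)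
    (u : 'rV[R]_d) : Prop :=
  is_int_vec (n%:R *: u - v0).

Definition nbr (R : realType) (d D : nat) (e : 'I_D -> 'rV[R]_d) (n : nat)
    (u : 'rV[R]_d) (i j : 'I_D) : 'rV[R]_d :=
  u - n%:R^-1 *: e i + n%:R^-1 *: e j.

Definition in_Ubar (R : realType) (d D : nat) (e : 'I_D -> 'rV[R]_d) (n : nat)
    (U : seq 'rV[R]_d) (x : 'rV[R]_d) : Prop :=
  x \in U \/ exists u i j, u \in U /\ x = nbr e n u i j.

Definition in_bdry (R : realType) (d D : nat) (e : 'I_D -> 'rV[R]_d) (n : nat)
    (U : seq 'rV[R]_d) (x : 'rV[R]_d) : Prop :=
  in_Ubar e n U x /\ x \notin U.

Definition Cn (R : realType) (d D : nat) (e : 'I_D -> 'rV[R]_d) (n : nat)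
    (q : 'rV[R]_d -> R) (u : 'rV[R]_d) : R :=
  q u * \sum_(i < D) (\sum_(j < D) q (nbr e n u i j))^-1.

(* Main.v *)
Require Import Defs.
From HB Require Import structures.
From mathcomp Require Import all_boot all_order all_algebra.
From mathcomp Require Import reals.
Import Order.TTheory GRing.Theory Num.Theory.
Local Open Scope ring_scope.

Section Aux.
Variable R : realType.

Lemma seq_argmin (T : eqType) (f : T -> R) (s : seq T) x :
  x \in s -> exists2 y, y \in s & forall z, z \in s -> f y <= f z.
Proof.
elim: s x => [|a s IH] x // _.
case: s IH => [|b s] IH.
  exists a; first by rewrite mem_head.
  by move=> z; rewrite inE => /eqP ->.
have [y ys Hy] := IH b (mem_head b s).
have [le|lt] := leP (f a) (f y).
  exists a; first by rewrite mem_head.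
  move=> z; rewrite inE => /orP [/eqP ->//|zs].
  exact: le_trans le (Hy z zs).
exists y; first by rewrite inE ys orbT.
move=> z; rewrite inE => /orP [/eqP ->|zs]; last exact: Hy.
exact: ltW.
Qed.

Lemma Cn_le (d D : nat) (e : 'I_D -> 'rV[R]_d) (n : nat) (q p : 'rV[R]_d -> R)
   u m : 0 < m -> (forall i j, 0 < p (nbr e n u i j)) ->
   (forall i j, m * p (nbr e n u i j) <= q (nbr e n u i j)) ->
   q u = m * p u -> 0 <= p u -> Cn e n q u <= Cn e n p u.
Proof.
move=> m0 pp qp qu pu0; rewrite /Cn qu -mulrA mulrCA; apply: ler_wpM2l => //.
rewrite mulr_sumr; apply: ler_sum => i _.
have sp : 0 < \sum_(j < D) p (nbr e n u i j).
  rewrite (bigD1 i) //=; apply: (lt_le_trans (pp i i)); rewrite lerDl.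
  by apply: sumr_ge0 => j _; exact: ltW.
have le : m * \sum_(j < D) p (nbr e n u i j) <= \sum_(j < D) q (nbr e n u i j).
  rewrite mulr_sumr; apply: ler_sum => j _; exact: qp.
have sq : 0 < m * \sum_(j < D) p (nbr e n u i j) by rewrite mulr_gt0.
have h : (\sum_(j < D) q (nbr e n u i j))^-1 <= (m * \sum_(j < D) p (nbr e n u i j))^-1.
  rewrite lef_pV2 // ?posrE //; exact: lt_le_trans sq le.
apply: (le_trans (ler_wpM2l (ltW m0) h)).
by rewrite invfM mulrA mulfV ?mul1r // gt_eqF.
Qed.

End Aux.

Theorem mainTheorem17 (R : realType) (d D : nat) (e : 'I_D -> 'rV[R]_d)
    (v0 : 'rV[R]_d) (n : nat) (U : seq 'rV[R]_d)
    (q qp qm : 'rV[R]_d -> R) :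
  bipartite_lattice e v0 ->
  (0 < n)%N ->
  (forall u, u \in U -> black_vertex v0 n u) ->
  (forall x, in_Ubar e n U x -> [/\ 0 < q x, 0 < qp x & 0 < qm x]) ->
  (forall u, u \in U -> Cn e n q u = 1) ->
  (forall u, u \in U -> Cn e n qp u > 1) ->
  (forall u, u \in U -> Cn e n qm u < 1) ->
  (* min_{Ubar} q/qm = min_{∂U} q/qm *)
  (forall x, in_Ubar e n U x ->
     exists2 y, in_bdry e n U y & q y / qm y <= q x / qm x) /\
  (* max_{Ubar} q/qp = max_{∂U} q/qp *)
  (forall x, in_Ubar e n U x ->
     exists2 y, in_bdry e n U y & q x / qp x <= q y / qp y).
Proof.
move=> _ _ _ pos Cq Cp Cm.
pose L := U ++ [seq nbr e n u ij.1 ij.2 | u <- U, ij <- enum {: 'I_D * 'I_D}].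
have memL : forall x, in_Ubar e n U x <-> x \in L.
  move=> x; split.
    case=> [xU|[u [i [j [uU ->]]]]]; rewrite mem_cat ?xU //.
    apply/orP; right; apply/allpairsP; exists (u, (i, j)); split=> //.
    by rewrite mem_enum.
  rewrite mem_cat => /orP [xU|]; first by left.
  move=> /allpairsP [[u [i j]] [/= uU _ ->]]; right; by exists u, i, j.
have nbrU : forall u i j, u \in U -> in_Ubar e n U (nbr e n u i j).
  by move=> u i j uU; right; exists u, i, j.
have uUb : forall u, u \in U -> in_Ubar e n U u by move=> u uU; left.
split=> x /memL xL.
- have [y yL Hy] := @seq_argmin R _ (fun z => q z / qm z) _ _ xL.
  exists y; last exact: Hy.
  split; first exact/memL.
  apply/negP => yU.
  have [q0 _ m0] := pos y (uUb y yU).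
  have : Cn e n q y <= Cn e n qm y.
    apply: (@Cn_le R d D e n _ _ y (q y / qm y)).
    + by rewrite divr_gt0.
    + by move=> i j; case: (pos _ (nbrU y i j yU)).
    + move=> i j; have [_ _ mz] := pos _ (nbrU y i j yU).
      have := Hy _ (proj1 (memL _) (nbrU y i j yU)).
      by rewrite ler_pdivlMr // mulrAC.
    + by rewrite divfK // gt_eqF.
    + exact: ltW.
  by rewrite Cq // => h; have := lt_le_trans (le_lt_trans h (Cm y yU)) (lexx 1); rewrite ltxx.
- have [y yL Hy] := @seq_argmin R _ (fun z => - (q z / qp z)) _ _ xL.
  exists y; last by have := Hy _ xL; rewrite lerN2.
  split; first exact/memL.
  apply/negP => yU.
  have [q0 p0 _] := pos y (uUb y yU).
  have : Cn e n qp y <= Cn e n q y.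
    apply: (@Cn_le R d D e n _ _ y (qp y / q y)).
    + by rewrite divr_gt0.
    + by move=> i j; case: (pos _ (nbrU y i j yU)).
    + move=> i j; have [qz pz _] := pos _ (nbrU y i j yU).
      have := Hy _ (proj1 (memL _) (nbrU y i j yU)).
      rewrite lerN2 ler_pdivrMr // mulrAC ler_pdivlMr // => h.
      rewrite mulrAC ler_pdivrMr //.
      by rewrite mulrC [qp _ * q y]mulrC.
    + by rewrite divfK // gt_eqF.
    + exact: ltW.
  by rewrite Cq // => h; have := lt_le_trans (Cp y yU) h; rewrite ltxx.
Qed.
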